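(* Let $P_1$ be the substitution on words over the alphabet $\{\mathtt R,\mathtt r,\mathtt L,\mathtt l,\mathtt S,\mathtt s\}$ given by $\mathtt R\mapsto\mathtt{Rr}$, $\mathtt r\mapsto\mathtt S$, $\mathtt L\mapsto\mathtt S$, $\mathtt l\mapsto\mathtt{Ll}$, $\mathtt S\mapsto\mathtt{Rl}$, $\mathtt s\mapsto\mathtt{Lr}$ (applied letterwise), and let $a_n$ be the number of letters of the word $P_1^n(\mathtt L)$, $n\ge 0$ (this is the length of the right side boundary of the polyomino $\mathcal S_n$ containing the Harter–Heighway dragon curve $\mathcal C_n$). Then $$a_n=a_{n-1}+2a_{n-3}\quad\text{for } n\ge 4,\qquad a_0=1,\ a_1=1,\ a_2=2.$$
   Context: $\mathcal C_n$ is the $n$-th iterate of the Harter–Heighway dragon curve (the turtle path of the word $P^n(A)$ for $P(A)=A+B$, $P(B)=A-B$), and $\mathcal S_n$ is the union of the squares having as a diagonal an edge of $\mathcal C_n$; by earlier work the right side of the boundary of $\mathcal S_n$ is traced self-avoidingly by the word $P_1^n(\mathtt L)$, one letter per boundary edge. *)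

(* Defs.v *)
From mathcomp Require Import all_boot.

Inductive letter : Type := R | r | L | l | S | s.

Definition P1_letter (x : letter) : seq letter :=
  match x with
  | R => [:: R; r]
  | r => [:: S]
  | L => [:: S]
  | l => [:: L; l]
  | S => [:: R; l]
  | s => [:: L; r]
  end.

Definition P1 (w : seq letter) : seq letter := flatten (map P1_letter w).

Definition a (n : nat) : nat := size (iter n P1 [:: L]).

(* Main.v *)
Require Import Defs.
From mathcomp Require Import all_boot.
From mathcomp Require Import zify.

Definition isx (x y : letter) : bool :=
  match x, y with
  | R, R | r, r | L, L | l, l | S, S | s, s => true
  | _, _ => false end.

Definition cnt x w := count (isx x) w.

Lemma size_cnt w : size w = cnt R w + cnt r w + cnt L w + cnt l w + cnt S w + cnt s w.
Proof.
elim: w => [|y w IH] //=; rewrite /cnt /= -!/(cnt _ _) IH; case: y => /=; lia.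
Qed.

Lemma P1_cons y w : P1 (y :: w) = P1_letter y ++ P1 w.
Proof. by []. Qed.

Lemma cnt_P1 w :
  [/\ cnt R (P1 w) = cnt R w + cnt S w,
      cnt r (P1 w) = cnt R w + cnt s w,
      cnt L (P1 w) = cnt l w + cnt s w,
      cnt l (P1 w) = cnt l w + cnt S w &
      (cnt S (P1 w) = cnt r w + cnt L w /\
      cnt s (P1 w) = 0)].
Proof.
elim: w => [|y w [h1 h2 h3 h4 [h5 h6]]] //.
rewrite P1_cons /cnt !count_cat -!/(cnt _ _) h1 h2 h3 h4 h5 h6.
by case: y => /=; (split; [lia|lia|lia|lia|split; lia]).
Qed.

Definition c x k := cnt x (iter k P1 [:: L]).

Lemma cs k : c s k = 0.
Proof. by case: k => // k; rewrite /c iterS; case: (cnt_P1 (iter k P1 [:: L])) => _ _ _ _ []. Qed.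

Lemma cstep k :
  [/\ c R k.+1 = c R k + c S k,
      c r k.+1 = c R k,
      c L k.+1 = c l k,
      c l k.+1 = c l k + c S k &
      c S k.+1 = c r k + c L k].
Proof.
have := cs k; rewrite /c iterS.
case: (cnt_P1 (iter k P1 [:: L])) => h1 h2 h3 h4 [h5 _] h6.
by rewrite h1 h2 h3 h4 h5 h6 !addn0.
Qed.

Lemma vrec n : forall x, isx s x = false -> c x (n+4) = c x (n+3) + 2 * c x (n+1).
Proof.
elim: n => [|n IH] x hx.
  by case: x hx.
have e : forall k, k.+1 + 4 = (k+4).+1 by move=> k; lia.
have e3 : n.+1 + 3 = (n+3).+1 by lia.
have e1 : n.+1 + 1 = (n+1).+1 by lia.
rewrite e e3 e1.
case: (cstep (n+4)) => a1 a2 a3 a4 a5.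
case: (cstep (n+3)) => b1 b2 b3 b4 b5.
case: (cstep (n+1)) => d1 d2 d3 d4 d5.
have IR := IH R erefl; have Ir := IH r erefl; have IL := IH L erefl.
have Il := IH l erefl; have IS := IH S erefl.
case: x hx => // _.
- rewrite a1 b1 d1 IR IS; lia.
- rewrite a2 b2 d2 IR; lia.
- rewrite a3 b3 d3 Il; lia.
- rewrite a4 b4 d4 Il IS; lia.
- rewrite a5 b5 d5 Ir IL; lia.
Qed.

Lemma a_c k : a k = c R k + c r k + c L k + c l k + c S k.
Proof. by rewrite /a size_cnt -/(c s k) cs addn0. Qed.

Theorem theorem2 :
  (forall n : nat, 4 <= n -> a n = a n.-1 + 2 * a (n - 3)) /\
  a 0 = 1 /\ a 1 = 1 /\ a 2 = 2.
Proof.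
split; last by [].
move=> n hn.
have -> : n = (n - 4) + 4 by lia.
have -> : (n - 4 + 4).-1 = n - 4 + 3 by lia.
have -> : n - 4 + 4 - 3 = n - 4 + 1 by lia.
rewrite !a_c !(vrec (n-4) R erefl) !(vrec (n-4) r erefl) !(vrec (n-4) L erefl) !(vrec (n-4) l erefl) !(vrec (n-4) S erefl); lia.
Qed.
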